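(* Let $K/F$ be a cyclic Galois extension of number fields of degree $m$ with $\mathrm{Gal}(K/F)=\langle\sigma\rangle$, and let $\mathcal{O}_F\subset\mathcal{O}_K$ be the rings of integers. Let $d\in\mathcal{O}_K^\times$ be such that $t^m-d$ is irreducible in the skew polynomial ring $K[t;\sigma]$, so that $(K/F,\sigma,d)=K[t;\sigma]/K[t;\sigma](t^m-d)$ is a nonassociative cyclic division algebra, and let $\Lambda=\mathcal{O}_K[t;\sigma]/\mathcal{O}_K[t;\sigma](t^m-d)$ be its natural order. Let $\mathcal{I}$ be a non-zero ideal of $\mathcal{O}_F$. Define $\overline{\sigma}$ on $\mathcal{O}_K/\mathcal{I}\mathcal{O}_K$ by $\overline{\sigma}(u+\mathcal{I}\mathcal{O}_K)=\sigma(u)+\mathcal{I}\mathcal{O}_K$ and put $\bar d=d+\mathcal{I}\mathcal{O}_K$. Then $\mathcal{I}\Lambda$ is a two-sided ideal of $\Lambda$ and $$\Lambda/\mathcal{I}\Lambda\cong\big((\mathcal{O}_K/\mathcal{I}\mathcal{O}_K)/(\mathcal{O}_F/\mathcal{I}),\overline{\sigma},\bar d\big),$$ a generalized nonassociative cyclic algebra over $\mathcal{O}_F/\mathcal{I}$ (the isomorphism being induced by reducing coefficients modulo $\mathcal{I}\mathcal{O}_K$).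
   Context: For a unital associative ring $S$ and an injective ring endomorphism $\sigma$ of $S$, $S[t;\sigma]$ denotes the skew polynomial ring of polynomials $\sum a_it^i$, $a_i\in S$, with multiplication determined by $ta=\sigma(a)t$. For a monic $f\in S[t;\sigma]$ of degree $m$, every $g$ has a unique right division $g=qf+r$ with $\deg r<m$; the Petit algebra $S[t;\sigma]/S[t;\sigma]f$ is the additive group of polynomials of degree $<m$ with multiplication $g\circ h=gh \bmod_r f$ (remainder of right division by $f$); it is a unital, in general nonassociative, ring. For commutative rings $S_0\subset S$ with $S_0\subset\mathrm{Fix}(\sigma)$ and $c\in S$, the (generalized) nonassociative cyclic algebra $(S/S_0,\sigma,c)$ is the Petit algebra $S[t;\sigma]/S[t;\sigma](t^m-c)$, regarded as an $S_0$-algebra. Elements of $\Lambda$ are polynomials $\sum_{i=0}^{m-1}a_it^i$ with $a_i\in\mathcal{O}_K$, and $\mathcal{I}\Lambda=\{\sum_{i=0}^{m-1}a_it^i: a_i\in\mathcal{I}\mathcal{O}_K\}$. *)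

(* Defs.v *)
From HB Require Import structures.
From mathcomp Require Import all_boot all_order all_algebra all_fingroup all_solvable all_field.
Set Implicit Arguments. Unset Strict Implicit. Unset Printing Implicit Defensive.
Import Order.TTheory GRing.Theory Num.Theory.
Local Open Scope ring_scope.

(* Skew polynomials S[t;s] over a ring S, represented by coefficient   *)
(* functions  nat -> S  (coefficient of t^k), with (a t^i)(b t^j) =    *)
(* a s^i(b) t^(i+j).                                                   *)
Section Skew.
Variable S : pzRingType.
Variable s : S -> S.

(* product of two skew polynomials whose coefficients vanish from index n on *)
Definition skew_mul (a b : nat -> S) (n : nat) : nat -> S :=
  fun k => \sum_(i < n) \sum_(j < n | (i + j == k)%N) a i * iter i s (b j).

(* one step of right division by a monic f of degree m: remove the     *)
(* coefficient of t^k (k >= m) of g by subtracting (g_k t^(k-m)) * f.  *)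
Definition rdiv_step (f : nat -> S) (m k : nat) (g : nat -> S) : nat -> S :=
  fun i => g i - (if (k - m <= i)%N
                  then g k * iter (k - m) s (f (i - (k - m))%N) else 0).

Fixpoint rdiv_red (f : nat -> S) (m n : nat) (g : nat -> S) : nat -> S :=
  match n with
  | 0 => g
  | n'.+1 => rdiv_red f m n' (rdiv_step f m (m + n') g)
  end.

(* remainder of right division of g (coefficients zero from index N on) *)
(* by the monic f of degree m: eliminates t^(N-1), ..., t^m in turn.    *)
Definition rmod_r (f : nat -> S) (m N : nat) (g : nat -> S) : nat -> S :=
  rdiv_red f m (N - m) g.

Definition cyc_poly (m : nat) (c : S) : nat -> S :=
  fun k => if k == m then 1 else if k == 0%N then - c else 0.

(* elements of the Petit algebra S[t;s]/S[t;s]f : polynomials of degree < m *)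
Definition coefs (m : nat) (g : {ffun 'I_m -> S}) : nat -> S :=
  fun k => if insub k is Some i then g i else 0.

Definition petit_mul (m : nat) (f : nat -> S) (g h : {ffun 'I_m -> S})
  : {ffun 'I_m -> S} :=
  [ffun i : 'I_m => rmod_r f m (2 * m) (skew_mul (coefs g) (coefs h) m) i].

Definition cyc_mul (m : nat) (c : S) (g h : {ffun 'I_m -> S}) : {ffun 'I_m -> S} :=
  petit_mul (cyc_poly m c) g h.

End Skew.

Section NF.
Variable L : fieldExtType rat.

Definition integral_Z (x : L) : Prop :=
  exists p : {poly int}, p \is monic /\ root (map_poly intr p) x.

Definition ring_of_integers (E : {vspace L}) (x : L) : Prop :=
  x \in E /\ integral_Z x.

Definition nonzero_ideal (O I : L -> Prop) : Prop :=
  [/\ forall x, I x -> O x,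
      I 0,
      forall x y, I x -> I y -> I (x + y),
      forall a x, O a -> I x -> I (a * x)
    & exists x, I x /\ x <> 0].

Definition ext_ideal (I OK : L -> Prop) (x : L) : Prop :=
  exists n (a b : 'I_n -> L), (forall i, I (a i)) /\ (forall i, OK (b i)) /\
    x = \sum_(i < n) a i * b i.

Definition skew_irreducible (E : {vspace L}) (s : L -> L) (m : nat)
  (f : nat -> L) : Prop :=
  ~ exists g h : nat -> L,
      [/\ forall k, g k \in E, forall k, h k \in E,
          forall k, (m <= k)%N -> g k = 0, forall k, (m <= k)%N -> h k = 0
        & forall k, skew_mul s g h m k = f k].

End NF.

(* Main.v *)
Require Import Defs.
From HB Require Import structures.
From mathcomp Require Import all_boot all_order all_algebra all_fingroup all_solvable all_field.
Import Order.TTheory GRing.Theory Num.Theory.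
Local Open Scope ring_scope.

Section Gen.
Variables (S1 S2 : pzRingType) (s1 : S1 -> S1) (s2 : S2 -> S2).

Lemma skew_mul_rel (RA RB RC : S1 -> S2 -> Prop) n a a' b b' :
  RC 0 0 -> (forall x y x' y', RC x y -> RC x' y' -> RC (x + x') (y + y')) ->
  (forall x y, RB x y -> RB (s1 x) (s2 y)) ->
  (forall x y x' y', RA x y -> RB x' y' -> RC (x * x') (y * y')) ->
  (forall k, RA (a k) (a' k)) -> (forall k, RB (b k) (b' k)) ->
  forall k, RC (skew_mul s1 a b n k) (skew_mul s2 a' b' n k).
Proof.
move=> H0 HD Hs HM Ha Hb k; rewrite /skew_mul.
apply: (big_ind2 RC H0 HD) => i _; apply: (big_ind2 RC H0 HD) => j _.
apply: HM => //; elim: (nat_of_ord i) => //= l IH; exact: Hs.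
Qed.

Lemma rmod_rel (RC RQ : S1 -> S2 -> Prop) f f' m N g g' :
  RC 0 0 -> (forall x y x' y', RC x y -> RC x' y' -> RC (x - x') (y - y')) ->
  (forall x y u v, RC x y -> RQ u v -> RC (x * u) (y * v)) ->
  (forall x y, RQ x y -> RQ (s1 x) (s2 y)) ->
  (forall k, RQ (f k) (f' k)) -> (forall k, RC (g k) (g' k)) ->
  forall k, RC (rmod_r s1 f m N g k) (rmod_r s2 f' m N g' k).
Proof.
move=> H0 HB HM Hs Hf.
have Hi : forall l k, RQ (iter l s1 (f k)) (iter l s2 (f' k)).
  by move=> l k; elim: l => [|l IHl] /=; [exact: Hf | exact: Hs].
rewrite /rmod_r; elim: (N - m)%N g g' => //= n IH g g' Hg.
apply: IH => i; rewrite /rdiv_step; apply: HB; first exact: Hg.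
case: ifP => [_|_]; last exact: H0.
exact: HM.
Qed.

Lemma coefs_rel (R : S1 -> S2 -> Prop) m (g : {ffun 'I_m -> S1}) (g' : {ffun 'I_m -> S2}) :
  R 0 0 -> (forall i, R (g i) (g' i)) -> forall k, R (coefs g k) (coefs g' k).
Proof. by move=> H0 Hg k; rewrite /coefs; case: insubP. Qed.

Lemma cyc_rel (R : S1 -> S2 -> Prop) m c c' :
  R 0 0 -> R 1 1 -> R (- c) (- c') -> forall k, R (cyc_poly m c k) (cyc_poly m c' k).
Proof. by move=> *; rewrite /cyc_poly; case: ifP => _ //; case: ifP. Qed.

Lemma cyc_mul_rel (RA RB RC RQ : S1 -> S2 -> Prop) m c c' (g h : {ffun 'I_m -> S1}) (g' h' : {ffun 'I_m -> S2}) :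
  RC 0 0 -> (forall x y x' y', RC x y -> RC x' y' -> RC (x + x') (y + y')) ->
  (forall x y x' y', RC x y -> RC x' y' -> RC (x - x') (y - y')) ->
  (forall x y, RB x y -> RB (s1 x) (s2 y)) ->
  (forall x y x' y', RA x y -> RB x' y' -> RC (x * x') (y * y')) ->
  (forall x y u v, RC x y -> RQ u v -> RC (x * u) (y * v)) ->
  (forall x y, RQ x y -> RQ (s1 x) (s2 y)) ->
  RA 0 0 -> RB 0 0 -> RQ 0 0 -> RQ 1 1 -> RQ (- c) (- c') ->
  (forall i, RA (g i) (g' i)) -> (forall i, RB (h i) (h' i)) ->
  forall i : 'I_m, RC (cyc_mul s1 c g h i) (cyc_mul s2 c' g' h' i).
Proof.
move=> C0 CD CB Bs M CQ Qs A0 B0 Q0 Q1 QN Hg Hh i.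
rewrite /cyc_mul /petit_mul !ffunE.
match goal with |- ?G => idtac G end.
apply: (@rmod_rel RC RQ (cyc_poly m c) (cyc_poly m c') m (2 * m)%N _ _ C0 CB CQ Qs); first exact: cyc_rel.
apply: (@skew_mul_rel RA RB RC m (coefs g) (coefs g') (coefs h) (coefs h') C0 CD Bs M); exact: coefs_rel.
Qed.
End Gen.

Section NFL.
Variables (L : splittingFieldType rat).

Lemma intZ_iff (x : L) : integral_Z x <-> integralOver (intr : int -> L) x.
Proof. by split=> [[p [? ?]]|[p ? ?]]; exists p. Qed.

Variable E : {subfield L}.
Notation OK := (ring_of_integers E).

Lemma ok0 : OK 0.
Proof. by split; [rewrite mem0v | apply/intZ_iff; apply: integral0]. Qed.
Lemma ok1 : OK 1.
Proof. by split; [rewrite mem1v | apply/intZ_iff; apply: integral1]. Qed.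
Lemma okD x y : OK x -> OK y -> OK (x + y).
Proof.
move=> [Ex /intZ_iff ix] [Ey /intZ_iff iy]; split; first by rewrite rpredD.
by apply/intZ_iff; apply: integral_add.
Qed.
Lemma okN x : OK x -> OK (- x).
Proof.
move=> [Ex /intZ_iff ix]; split; first by rewrite rpredN.
by apply/intZ_iff; apply: integral_opp.
Qed.
Lemma okB x y : OK x -> OK y -> OK (x - y).
Proof. by move=> ? ?; apply: okD => //; apply: okN. Qed.
Lemma okM x y : OK x -> OK y -> OK (x * y).
Proof.
move=> [Ex /intZ_iff ix] [Ey /intZ_iff iy]; split; first by rewrite rpredM.
by apply/intZ_iff; apply: integral_mul.
Qed.
Lemma okS (sigma : gal_of E) x : OK x -> OK (sigma x).
Proof.
move=> [Ex [p [mp rp]]]; split; first exact: memv_gal.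
exists p; split => //.
have := rmorph_root (gal_repr sigma) rp; rewrite -map_poly_comp.
congr (root _ _); apply: eq_map_poly => z /=; exact: rmorph_int.
Qed.

Lemma okSub (F : {subfield L}) x : (F <= E)%VS -> ring_of_integers F x -> OK x.
Proof. by move=> FE [Fx ix]; split => //; apply: (subvP FE). Qed.
End NFL.

Section IOKsec.
Variables (L : splittingFieldType rat) (K F : {subfield L}) (FK : (F <= K)%VS)
  (I : L -> Prop) (HI : nonzero_ideal (ring_of_integers F) I).
Notation OK := (ring_of_integers K).
Notation IOK := (ext_ideal I (ring_of_integers K)).

Lemma iI_OK x : I x -> OK x.
Proof. by case: HI => H _ _ _ _ /H; apply: okSub. Qed.

Lemma iok_ok x : IOK x -> OK x.
Proof.
move=> [n [a [b [Ha [Hb ->]]]]].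
apply: (big_ind OK (ok0 _ K) (@okD _ K)) => i _; apply: okM => //; exact: iI_OK.
Qed.

Lemma iok0 : IOK 0.
Proof. exists 0%N, (fun _ => 0), (fun _ => 0); split; first by case. split; first by case. by rewrite big_ord0. Qed.

Lemma iok_add x y : IOK x -> IOK y -> IOK (x + y).
Proof.
move=> [n1 [a1 [b1 [Ha1 [Hb1 ->]]]]] [n2 [a2 [b2 [Ha2 [Hb2 ->]]]]].
exists (n1 + n2)%N,
  (fun i => match split i with inl j => a1 j | inr j => a2 j end),
  (fun i => match split i with inl j => b1 j | inr j => b2 j end).
split; first by move=> i; case: (split i).
split; first by move=> i; case: (split i).
rewrite big_split_ord /=; congr (_ + _); apply: eq_bigr => i _.
  by have /= -> := unsplitK (inl i : 'I_n1 + 'I_n2).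
by have /= -> := unsplitK (inr i : 'I_n1 + 'I_n2).
Qed.

Lemma iok_mulr x c : IOK x -> OK c -> IOK (x * c).
Proof.
move=> [n [a [b [Ha [Hb ->]]]]] Hc.
exists n, a, (fun i => b i * c); split => //; split; first by move=> i; apply: okM.
by rewrite mulr_suml; apply: eq_bigr => i _; rewrite mulrA.
Qed.

Lemma iok_mull x c : IOK x -> OK c -> IOK (c * x).
Proof. by move=> *; rewrite mulrC; apply: iok_mulr. Qed.

Lemma iok_opp x : IOK x -> IOK (- x).
Proof. by move=> H; rewrite -mulrN1; apply: iok_mulr => //; apply/okN/(ok1 _ K). Qed.

Lemma iok_sub x y : IOK x -> IOK y -> IOK (x - y).
Proof. by move=> ? ?; apply: iok_add => //; apply: iok_opp. Qed.

Lemma iok_gal (sigma : gal_of K) x : sigma \in ('Gal(K / F))%g -> IOK x -> IOK (sigma x).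
Proof.
move=> sG [n [a [b [Ha [Hb ->]]]]].
exists n, a, (fun i => sigma (b i)); split => //; split; first by move=> i; apply: okS.
rewrite rmorph_sum; apply: eq_bigr => i _; rewrite rmorphM; congr (_ * _); apply: (fixed_gal FK sG).
by case: HI => H _ _ _ _; case: (H _ (Ha i)) => Fa _.
Qed.
End IOKsec.

Theorem theorem1
  (L : splittingFieldType rat) (K F : {subfield L}) (sigma : gal_of K)
  (FK : (F <= K)%VS) (galKF : galois F K)
  (gen : ('Gal(K / F) = <[sigma]>)%g)
  (d : L) (I : L -> Prop) :
  let m := \dim_F K in
  let s := fun x : L => sigma x in
  let OK := ring_of_integers K in
  let OF := ring_of_integers F in
  let IOK := ext_ideal I OK in
  let Lam := fun g : {ffun 'I_m -> L} => forall i, OK (g i) in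
  let ILam := fun g : {ffun 'I_m -> L} => forall i, IOK (g i) in
  let mulL := cyc_mul s d in
  OK d -> d != 0 -> OK d^-1 ->
  skew_irreducible K s m (cyc_poly m d) ->
  nonzero_ideal OF I ->
  (* I Lambda is a two-sided ideal of Lambda *)
  ((forall g, ILam g -> Lam g) /\
   ILam 0 /\
   (forall g h, ILam g -> ILam h -> ILam (g + h)) /\
   (forall g, ILam g -> ILam (- g)) /\
   (forall g h, Lam g -> ILam h -> ILam (mulL g h) /\ ILam (mulL h g)))
  /\
  (* Lambda / I Lambda is isomorphic to ((O_K/I O_K)/(O_F/I), sigma-bar, d-bar),
     via reduction of coefficients: for any realization S of O_K / I O_K *)
  (forall (S : comPzRingType) (pi : L -> S) (sbar : S -> S),
     pi 1 = 1 ->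
     (forall x y, OK x -> OK y -> pi (x + y) = pi x + pi y) ->
     (forall x y, OK x -> OK y -> pi (x * y) = pi x * pi y) ->
     (forall u : S, exists x, OK x /\ pi x = u) ->
     (forall x, OK x -> (pi x = 0 <-> IOK x)) ->
     (forall x, OK x -> sbar (pi x) = pi (s x)) ->
     let phi := fun g : {ffun 'I_m -> L} => [ffun i => pi (g i)] in
     [/\ forall g h, Lam g -> Lam h -> phi (g + h) = phi g + phi h,
         forall g h, Lam g -> Lam h ->
           phi (mulL g h) = cyc_mul sbar (pi d) (phi g) (phi h),
         forall a g, OF a -> Lam g -> phi [ffun i => a * g i] = [ffun i => pi a * phi g i],
         forall u : {ffun 'I_m -> S}, exists g, Lam g /\ phi g = u
       & forall g, Lam g -> (phi g = 0 <-> ILam g)]).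
Proof.
move=> m s OK OF IOK Lam ILam mulL OKd dn0 OKdV irr HI.
have sG : (sigma \in 'Gal(K / F))%g by rewrite gen cycle_id.
have okS' : forall x, OK x -> OK (s x) by move=> x; apply: okS.
split.
  split; first by move=> g Hg i; apply: (@iok_ok _ _ _ FK _ HI (g i) (Hg i)).
  split; first by move=> i; rewrite ffunE; apply: iok0.
  split; first by move=> g h Hg Hh i; rewrite ffunE; apply: iok_add; [exact: (Hg i) | exact: (Hh i)].
  split; first by move=> g Hg i; rewrite ffunE; apply: iok_opp; exact: (Hg i).
  have I0 : IOK 0 by apply: iok0.
  have O0 : OK 0 by apply: ok0.
  have O1 : OK 1 by apply: ok1.
  have ON : OK (- d) by apply: okN.
  have ID : forall x (y : L) x' (y' : L), IOK x -> IOK x' -> IOK (x + x').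
    by move=> *; apply: iok_add.
  have IB : forall x (y : L) x' (y' : L), IOK x -> IOK x' -> IOK (x - x').
    by move=> *; apply: iok_sub.
  have IS : forall x (y : L), IOK x -> IOK (s x).
    by move=> *; apply: (@iok_gal _ _ _ FK _ HI).
  have OS : forall x (y : L), OK x -> OK (s x).
    by move=> *; apply: okS'.
  have OIM : forall x (y : L) x' (y' : L), OK x -> IOK x' -> IOK (x * x').
    by move=> *; apply: iok_mull.
  have IOM : forall x (y : L) x' (y' : L), IOK x -> OK x' -> IOK (x * x').
    by move=> *; apply: iok_mulr.
  move=> g h Hg Hh; split => i.
    exact: (@cyc_mul_rel _ _ s s (fun x _ => OK x) (fun x _ => IOK x) (fun x _ => IOK x)
      (fun x _ => OK x) m d d g h g h I0 ID IB IS OIM IOM OS O0 I0 O0 O1 ON Hg Hh i).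
  exact: (@cyc_mul_rel _ _ s s (fun x _ => IOK x) (fun x _ => OK x) (fun x _ => IOK x)
      (fun x _ => OK x) m d d h g h g I0 ID IB OS IOM IOM OS I0 O0 O0 O1 ON Hh Hg i).
move=> S pi sbar pi1 piD piM piS piK piSig phi.
have ok0' : OK 0 by apply: ok0.
have pi0 : pi 0 = 0.
  have h := piD 0 0 ok0' ok0'; rewrite addr0 in h.
  by apply: (@addrI _ (pi 0)); rewrite addr0 -h.
have piN : forall x, OK x -> pi (- x) = - pi x.
  move=> x Ox; apply: (@addrI _ (pi x)); rewrite -piD ?subrr ?pi0 //; exact: okN.
pose R := fun x y => OK x /\ pi x = y.
have R0 : R 0 0 by [].
have RD : forall x y x' y', R x y -> R x' y' -> R (x + x') (y + y').
  by move=> x y x' y' [Ox <-] [Ox' <-]; split; [apply: okD | apply: piD].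
have RB : forall x y x' y', R x y -> R x' y' -> R (x - x') (y - y').
  move=> x y x' y' [Ox <-] [Ox' <-]; split; first by apply: okB.
  by rewrite piD ?piN //; apply: okN.
have RM : forall x y x' y', R x y -> R x' y' -> R (x * x') (y * y').
  by move=> x y x' y' [Ox <-] [Ox' <-]; split; [apply: okM | apply: piM].
have RS : forall x y, R x y -> R (s x) (sbar y).
  by move=> x y [Ox <-]; split; [apply: okS' | rewrite piSig].
split.
- by move=> g h Hg Hh; apply/ffunP => i; rewrite !ffunE piD.
- move=> g h Hg Hh; apply/ffunP => i; rewrite ffunE.
  have [] // := @cyc_mul_rel _ _ s sbar R R R R m d (pi d) g h (phi g) (phi h)
    R0 RD RB RS RM RM RS R0 R0 R0 _ _ _ _ i.
  + by split; [apply: ok1 | ].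
  + by split; [apply: okN | apply: piN].
  + by move=> j; split; rewrite ?ffunE.
  + by move=> j; split; rewrite ?ffunE.
- move=> a g Ha Hg; apply/ffunP => i; rewrite !ffunE piM //.
  exact: (@okSub _ _ _ _ FK Ha).
- move=> u; have [f Hf] : exists f : forall i : 'I_m, L, forall i, OK (f i) /\ pi (f i) = u i.
    by apply: (@fin_all_exists _ (fun _ => L) (fun i x => OK x /\ pi x = u i)) => i; apply: piS.
  exists [ffun i => f i]; split; first by move=> i; rewrite ffunE; case: (Hf i).
  by apply/ffunP => i; rewrite !ffunE; case: (Hf i).
- move=> g Hg; split.
    move=> H i; apply/piK; first exact: (Hg i).
    have := congr1 (fun u : {ffun 'I_m -> S} => u i) H.
    by rewrite /= !ffunE.
  by move=> H; apply/ffunP => i; rewrite !ffunE; apply/piK.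
Qed.
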